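(* Let $Z\subset\mathbb R^n$ be a convex and compact set. For every $y\in Z\setminus\partial Z$ there exists an extreme point $x$ of $Z$ such that $b(y)=t_y(x)$.
   Context: For $x,y\in Z$ write $x\leq_C y$ if there exist $z\in Z$ and $0<t\leq 1$ with $y=tx+(1-t)z$. The (algebraic) boundary $\partial Z$ is the set of $y\in Z$ for which there exists $x\in Z$ with $x\not\leq_C y$. The weight function is $t_y(x)=\sup\{0\leq t<1 : \frac{y-tx}{1-t}\in Z\}$ for $x,y\in Z$, and the boundariness of $y\in Z$ is $b(y)=\inf_{x\in Z}t_y(x)$. *)

(* Defs.v *)
From HB Require Import structures.
From mathcomp Require Import all_boot all_order all_algebra.
From mathcomp Require Import all_classical all_reals all_analysis.
Set Implicit Arguments. Unset Strict Implicit. Unset Printing Implicit Defensive.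
Import Order.TTheory GRing.Theory Num.Theory.
Import numFieldNormedType.Exports.
Local Open Scope classical_set_scope.
Local Open Scope ring_scope.

Section Defs.
Variables (R : realType) (n : nat).
Implicit Types (Z : set 'rV[R]_n) (x y z : 'rV[R]_n).

Definition leC Z x y : Prop :=
  exists z, Z z /\ exists t : R, 0 < t <= 1 /\ y = t *: x + (1 - t) *: z.

Definition alg_boundary Z : set 'rV[R]_n :=
  [set y | Z y /\ exists x, Z x /\ ~ leC Z x y].

Definition weight Z y x : R :=
  sup [set t : R | 0 <= t < 1 /\ Z ((1 - t)^-1 *: (y - t *: x))].

Definition boundariness Z y : R := inf [set weight Z y x | x in Z].

Definition extreme_point Z x : Prop :=
  Z x /\ forall a b (t : R), Z a -> Z b -> 0 < t < 1 ->
    x = t *: a + (1 - t) *: b -> a = x /\ b = x.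
End Defs.

(* Main.v *)
Require Import Defs.
From HB Require Import structures.
From mathcomp Require Import all_boot all_order all_algebra.
From mathcomp Require Import all_classical all_reals all_analysis.
From mathcomp Require Import ring lra.
Import Order.TTheory GRing.Theory Num.Theory.
Import numFieldNormedType.Exports.
Local Open Scope classical_set_scope.
Local Open Scope ring_scope.
Lemma convZ (R : realType) n (Z : set 'rV[R]_n) : convex_set Z ->
  forall a b (t : R), Z a -> Z b -> 0 <= t -> t <= 1 -> Z (t *: a + (1 - t) *: b).
Proof.
move=> cZ a b t Za Zb t0 t1.
have := cZ a b (Itv01 t0 t1) (mem_set Za) (mem_set Zb).
by rewrite inE.
Qed.

Section Main.
Variables (R : realType) (n : nat) (Z : set 'rV[R]_n).
Hypothesis cZ : forall a b (t : R), Z a -> Z b -> 0 <= t -> t <= 1 ->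
  Z (t *: a + (1 - t) *: b).
Variable y : 'rV[R]_n.
Hypothesis Zy : Z y.
Hypothesis yint : forall x, Z x -> exists e : R, 0 < e /\ Z (y - e *: (x - y)).

Definition S (l : R) (u : 'rV[R]_n) := exists d, Z (y + d) /\ u = l *: d.

Lemma S0 : S 0 0.
Proof. by exists 0; rewrite addr0 scale0r. Qed.

Lemma Sadd l1 l2 u1 u2 : 0 <= l1 -> 0 <= l2 -> S l1 u1 -> S l2 u2 ->
  S (l1 + l2) (u1 + u2).
Proof.
move=> l10 l20 [d1 [Zd1 ->]] [d2 [Zd2 ->]].
have [l0|l0] := eqVneq (l1 + l2) 0.
  have e1 : l1 = 0 by apply/eqP; rewrite eq_le l10 -l0 lerDl l20.
  have e2 : l2 = 0 by move: l0; rewrite e1 add0r.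
  by rewrite e1 e2 !scale0r addr0 add0r; exact: S0.
have lpos : 0 < l1 + l2 by rewrite lt_neqAle eq_sym l0 addr_ge0.
exists ((l1 / (l1 + l2)) *: d1 + (l2 / (l1 + l2)) *: d2); split.
  have := @cZ _ _ (l1 / (l1 + l2)) Zd1 Zd2.
  have -> : y + ((l1 / (l1 + l2)) *: d1 + (l2 / (l1 + l2)) *: d2) =
     l1 / (l1 + l2) *: (y + d1) + (1 - l1 / (l1 + l2)) *: (y + d2).
    apply/rowP => j; rewrite !mxE; field; exact: l0.
  move=> H; apply: H; first exact: (divr_ge0 l10 (ltW lpos)).
  by rewrite ler_pdivrMr // mul1r lerDl.
apply/rowP => j; rewrite !mxE; field; exact: l0.
Qed.

Lemma Sle l u : 0 <= l -> l <= 1 -> S l u -> Z (y + u).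
Proof.
move=> l0 l1 [d [Zd ->]].
have -> : y + l *: d = l *: (y + d) + (1 - l) *: y.
  by apply/rowP => j; rewrite !mxE; ring.
exact: cZ.
Qed.

Lemma Sone (e c : R) b : 0 < e -> `|c| <= e ->
  (forall c', `|c'| <= e -> Z (y + c' *: b)) -> S (`|c| / e) (c *: b).
Proof.
move=> e0 ce H.
have [->|c0] := eqVneq c 0.
  by rewrite normr0 mul0r scale0r; exact: S0.
exists ((c * e / `|c|) *: b); split.
  apply: H; rewrite normrM normfV normrM normr_id (gtr0_norm e0).
  by rewrite -mulrA mulrC -mulrA mulVf ?mulr1 // normr_eq0.
have nc : `|c| != 0 by rewrite normr_eq0.
apply/rowP => j; rewrite !mxE; field.
by rewrite nc /= gt_eqF.
Qed.

Lemma rows_ball m (B : 'M[R]_(m, n)) : (forall i, Z (y + row i B)) ->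
  exists e : R, 0 < e /\ forall i (c : R), `|c| <= e -> Z (y + c *: row i B).
Proof.
move=> HB.
have H i : exists e : R, 0 < e /\ Z (y - e *: row i B).
  have [e [e0 Ze]] := yint _ (HB i); exists e; split => //.
  by rewrite addrAC subrr add0r in Ze.
have [f Hf] := choice H.
exists (\big[Order.min/1]_i f i); split.
  by apply/bigmin_gtP; split => // i _; exact: (Hf i).1.
move=> i c ce.
have e1 : \big[Order.min/1]_i f i <= 1 by apply: bigmin_le_id.
have ef : \big[Order.min/1]_i f i <= f i by apply: bigmin_le.
have [f0 Zf] := Hf i.
have [c0|c0] := leP 0 c.
  have -> : y + c *: row i B = c *: (y + row i B) + (1 - c) *: y.
    by apply/rowP => j; rewrite !mxE; ring.
  apply: cZ => //; apply: le_trans e1; apply: le_trans ce.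
  by rewrite ger0_norm.
have fn0 : f i != 0 by rewrite gt_eqF.
have -> : y + c *: row i B = (- c / f i) *: (y - f i *: row i B) + (1 - (- c / f i)) *: y.
  apply/rowP => j; rewrite !mxE; field; exact: fn0.
apply: cZ => //.
  by rewrite divr_ge0 // ?oppr_ge0 ?ltW.
rewrite ler_pdivrMr // mul1r -(ltr0_norm c0).
exact: le_trans ce ef.
Qed.

Lemma coef_comb m (B : 'M[R]_(m, n)) (e : R) : 0 < e ->
  (forall i (c : R), `|c| <= e -> Z (y + c *: row i B)) ->
  forall c : 'rV[R]_m, \sum_i `|c 0 i| <= e -> Z (y + c *m B).
Proof.
move=> e0 HB c ce.
rewrite mulmx_sum_row.
have : 0 <= \sum_i (`|c 0 i| / e) /\ S (\sum_i (`|c 0 i| / e)) (\sum_i c 0 i *: row i B).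
  apply: (big_rec2 (fun l u => 0 <= l /\ S l u)); first by split => //; exact: S0.
  move=> i l u _ [l0 Slu]; split; first by rewrite addr_ge0 // divr_ge0 // ltW.
  apply: Sadd => //; first by rewrite divr_ge0 // ltW.
  apply: Sone => //; last exact: HB.
  apply: le_trans ce; rewrite (bigD1 i) //= lerDl.
  by rewrite sumr_ge0.
move=> [l0 Sl]; apply: (@Sle _ _ l0 _ Sl).
by rewrite -mulr_suml ler_pdivrMr // mul1r.
Qed.

Lemma span_ball m (B : 'M[R]_(m, n)) (e : R) : 0 < e ->
  (forall c : 'rV[R]_m, \sum_i `|c 0 i| <= e -> Z (y + c *m B)) ->
  exists r : R, 0 < r /\ forall d, (d <= B)%MS -> (forall j, `|d 0 j| < r) -> Z (y + d).
Proof.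
move=> e0 H.
set P := pinvmx B.
set C := \sum_i \sum_j `|P j i|.
have C0 : 0 <= C by rewrite sumr_ge0 // => i _; rewrite sumr_ge0.
have C1 : 0 < C + 1 by rewrite ltr_wpDl.
exists (e / (C + 1)); split; first by rewrite divr_gt0.
move=> d dB dr; rewrite -(mulmxKpV dB); apply: H.
apply: (@le_trans _ _ (\sum_i \sum_j (e / (C + 1)) * `|P j i|)).
  apply: ler_sum => i _; rewrite mxE.
  apply: le_trans (ler_norm_sum _ _ _) _.
  apply: ler_sum => j _; rewrite normrM.
  by apply: ler_wpM2r => //; exact: ltW.
under eq_bigr do rewrite -mulr_sumr.
rewrite -mulr_sumr -/C.
rewrite mulrAC ler_pdivrMr // ler_pM2l //.
by rewrite lerDl.
Qed.

Lemma span_exists : exists m (B : 'M[R]_(m, n)),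
  (forall i, Z (y + row i B)) /\ forall x, Z x -> (x - y <= B)%MS.
Proof.
apply: contrapT => H.
have key k : exists m (B : 'M[R]_(m, n)), (forall i, Z (y + row i B)) /\ (k <= \rank B)%N.
  elim: k => [|k [m [B [HB Hk]]]].
    by exists 0%N, 0; split => // -[].
  have : ~ (forall x, Z x -> (x - y <= B)%MS) by move=> Hx; apply: H; exists m, B.
  move=> /existsNP [x /not_implyP [Zx nx]].
  exists (1 + m)%N, (col_mx (x - y) B); split.
    move=> i; rewrite -[i]splitK; case: (fintype.split i) => [i1|i2] /=.
      rewrite rowKu.
      have -> : row i1 (x - y) = x - y by apply/rowP => j; rewrite !mxE (ord1 i1).
      by rewrite addrC subrK.
    by rewrite rowKd; exact: HB.
  apply: leq_ltn_trans Hk _; apply: rank_ltmx; rewrite ltmxE.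
  have := submx_refl (col_mx (x - y) B); rewrite col_mx_sub => /andP[_ ->] /=.
  by rewrite col_mx_sub negb_and; apply/orP; left; apply/negP.
have [m [B [_ Hk]]] := key n.+1.
by have := rank_leq_col B; rewrite leqNgt Hk.
Qed.

Lemma rad : exists r : R, 0 < r /\ forall a b (c : R), Z a -> Z b ->
  (forall j, `|c * (a 0 j - b 0 j)| < r) -> Z (y + c *: (a - b)).
Proof.
have [m [B [HB Hsp]]] := span_exists.
have [e [e0 He]] := @rows_ball _ _ HB.
have [r [r0 Hr]] := @span_ball _ _ _ e0 (@coef_comb _ _ _ e0 He).
exists r; split => // a b c Za Zb Hc.
apply: Hr; last by move=> j; rewrite !mxE.
have -> : c *: (a - b) = c *: ((a - y) + (-1) *: (b - y)).
  by apply/rowP => j; rewrite !mxE; ring.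
by apply: scalemx_sub; apply: addmx_sub; [exact: Hsp | apply: scalemx_sub; exact: Hsp].
Qed.

Definition T x := [set t : R | 0 <= t < 1 /\ Z ((1 - t)^-1 *: (y - t *: x))].

Lemma wE x : weight Z y x = sup (T x).
Proof. by []. Qed.

Lemma T0 x : T x 0.
Proof.
split; first by rewrite lexx ltr01.
by rewrite subr0 invr1 scale1r scale0r subr0.
Qed.

Lemma Tub x : ubound (T x) 1.
Proof. by move=> t [/andP[_ /ltW]]. Qed.

Lemma Thas x : has_sup (T x).
Proof. by split; [exists 0; exact: T0 | exists 1; exact: Tub]. Qed.

Lemma Tw x t : T x t -> t <= weight Z y x.
Proof. by move=> Tt; rewrite wE; exact: sup_upper_bound (Thas x) _ Tt. Qed.

Lemma w_ge0 x : 0 <= weight Z y x.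
Proof. exact: Tw (T0 x). Qed.

Lemma w_le1 x : weight Z y x <= 1.
Proof. by rewrite wE; apply: sup_le_ub; [exists 0; exact: T0 | exact: Tub]. Qed.

Lemma w_ub x c : (forall t, T x t -> t <= c) -> weight Z y x <= c.
Proof. by move=> H; rewrite wE; apply: sup_le_ub; [exists 0; exact: T0 | exact: H]. Qed.

Lemma w_pos x : Z x -> 0 < weight Z y x.
Proof.
move=> Zx; have [e [e0 Ze]] := yint _ Zx.
have e1 : 0 < 1 + e by rewrite addr_gt0.
apply: (@lt_le_trans _ _ (e / (1 + e))); first by rewrite divr_gt0.
apply: Tw.
split.
  rewrite divr_ge0 ?ltW //= ltr_pdivrMr // mul1r ltrDr; exact: ltr01.
have -> : (1 - e / (1 + e))^-1 *: (y - (e / (1 + e)) *: x) = y - e *: (x - y).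
  apply/rowP => j; rewrite !mxE; field.
  by rewrite gt_eqF //= addrK oner_neq0.
exact: Ze.
Qed.

Lemma shift x x' t (al : R) : Z x -> Z x' -> T x t -> 0 < al ->
  Z (y + (t / al) *: (x - x')) -> T x' (t / (1 + al)).
Proof.
move=> Zx Zx' [/andP[t0 t1] Zz] al0 Zw.
have a1 : 0 < 1 + al by rewrite addr_gt0.
have t1' : 0 < 1 - t by rewrite subr_gt0.
have ta : 0 < 1 - t + al by rewrite addr_gt0.
split.
  rewrite (divr_ge0 t0 (ltW a1)) /= ltr_pdivrMr // mul1r.
  by apply: lt_trans t1 _; rewrite ltrDl.
have -> : (1 - t / (1 + al))^-1 *: (y - (t / (1 + al)) *: x') =
   ((1 - t) / (1 - t + al)) *: ((1 - t)^-1 *: (y - t *: x)) +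
   (1 - (1 - t) / (1 - t + al)) *: (y + (t / al) *: (x - x')).
  apply/rowP => j; rewrite !mxE; field.
  by rewrite !gt_eqF.
apply: cZ => //; first by rewrite divr_ge0 ?ltW.
by rewrite ler_pdivrMr // mul1r lerDl ltW.
Qed.

Lemma lip x x' (al : R) : Z x -> Z x' -> 0 < al ->
  (forall t, 0 <= t -> t <= 1 -> Z (y + (t / al) *: (x - x'))) ->
  weight Z y x <= weight Z y x' + al.
Proof.
move=> Zx Zx' al0 H.
have a1 : 0 < 1 + al by rewrite addr_gt0.
apply: (@le_trans _ _ ((1 + al) * weight Z y x')).
  apply: w_ub => t Tt.
  rewrite -ler_pdivrMl //.
  rewrite mulrC; apply: Tw; apply: (@shift _ _ _ _ Zx Zx' Tt al0).
  by apply: H; case: Tt => /andP[t0 /ltW].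
rewrite mulrDl mul1r lerD2l mulrC ger_pMl //.
exact: w_le1.
Qed.

Lemma ballE (x t : 'rV[R]_n) e : ball x e t -> forall j, `|x 0 j - t 0 j| < e.
Proof. by move=> [_ H] j; have := H 0 j; rewrite -ball_normE. Qed.

Lemma wlip : exists r : R, 0 < r /\ forall x x' (al : R), Z x -> Z x' -> 0 < al ->
  (forall j, `|x 0 j - x' 0 j| < r * al) -> weight Z y x <= weight Z y x' + al.
Proof.
have [r [r0 Hr]] := rad.
exists r; split => // x x' al Zx Zx' al0 Hc.
apply: lip => // t t0 t1; apply: Hr => // j.
rewrite normrM (ger0_norm (divr_ge0 t0 (ltW al0))).
apply: (@le_lt_trans _ _ (`|x 0 j - x' 0 j| / al)).
  by rewrite mulrAC ler_pM2r ?invr_gt0 // ler_piMl.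
by rewrite ltr_pdivrMr // mulrC.
Qed.

Lemma aux_abs (a b e : R) : 0 < e -> a <= b + e / 2 -> b <= a + e / 2 -> `|a - b| < e.
Proof. by move=> e0 h1 h2; rewrite ltr_norml; apply/andP; split; lra. Qed.

Lemma wcont : {within Z, continuous (weight Z y)}.
Proof.
have [r [r0 Hr]] := wlip.
apply/subspace_continuousP => x Zx; apply/cvgrPdist_lt => e e0.
have e2 : 0 < e / 2 by rewrite divr_gt0.
apply/nbhs_ballP; exists (r * (e / 2)); first by apply: mulr_gt0.
move=> t /ballE Bt Zt.
have h1 := Hr x t (e / 2) Zx Zt e2 Bt.
have h2 : weight Z y t <= weight Z y x + e / 2.
  by apply: Hr => // j; rewrite distrC; exact: Bt.
exact: aux_abs.
Qed.

Lemma combo a b (s ta tb : R) : Z a -> Z b -> 0 < s -> s < 1 -> T a ta -> T b tb ->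
  0 < ta -> 0 < tb -> T (s *: a + (1 - s) *: b) ((s / ta + (1 - s) / tb)^-1).
Proof.
move=> Za Zb s0 s1 [/andP[_ ta1] Zza] [/andP[_ tb1] Zzb] ta0 tb0.
set h := s / ta + (1 - s) / tb.
have h1 : 1 < h.
  have H1 : s < s / ta by rewrite ltr_pdivlMr // gtr_pMr.
  have H2 : 1 - s < (1 - s) / tb by rewrite ltr_pdivlMr // gtr_pMr // subr_gt0.
  by apply: (le_lt_trans _ (ltrD H1 H2)); rewrite addrC subrK.
have h0 : 0 < h by apply: lt_trans h1.
have t1 : h^-1 < 1 by rewrite invf_lt1.
have t0 : 0 < h^-1 by rewrite invr_gt0.
have ta1' : 0 < 1 - ta by rewrite subr_gt0.
have tb1' : 0 < 1 - tb by rewrite subr_gt0.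
have tt1 : 0 < 1 - h^-1 by rewrite subr_gt0.
split; first by rewrite (ltW t0) t1.
have k0 : s * tb + (1 - s) * ta = h * (ta * tb).
  by rewrite /h; field; rewrite !gt_eqF.
have k1 : s * tb + (1 - s) * ta - ta * tb = (h - 1) * (ta * tb).
  by rewrite k0 mulrBl mul1r.
have n1 : s * tb + (1 - s) * ta != 0 by rewrite k0 gt_eqF // !mulr_gt0.
have n2 : s * tb + (1 - s) * ta - ta * tb != 0.
  by rewrite k1 gt_eqF // !mulr_gt0 // subr_gt0.
set mu := h^-1 * s * (1 - ta) / (ta * (1 - h^-1)).
have mu1 : 1 - mu = h^-1 * (1 - s) * (1 - tb) / (tb * (1 - h^-1)).
  rewrite /mu /h; field.
  by rewrite n1 n2 /= !gt_eqF.
have -> : (1 - h^-1)^-1 *: (y - h^-1 *: (s *: a + (1 - s) *: b)) =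
   mu *: ((1 - ta)^-1 *: (y - ta *: a)) + (1 - mu) *: ((1 - tb)^-1 *: (y - tb *: b)).
  rewrite mu1; apply/rowP => j; rewrite !mxE /mu /h; field.
  by rewrite n1 n2 /= !gt_eqF.
apply: cZ => //.
  exact: (divr_ge0 (mulr_ge0 (mulr_ge0 (ltW t0) (ltW s0)) (ltW ta1')) (mulr_ge0 (ltW ta0) (ltW tt1))).
have s1' : 0 < 1 - s by rewrite subr_gt0.
rewrite -subr_ge0 mu1.
exact: (divr_ge0 (mulr_ge0 (mulr_ge0 (ltW t0) (ltW s1')) (ltW tb1')) (mulr_ge0 (ltW tb0) (ltW tt1))).
Qed.

Lemma face x0 a b (s : R) : Z x0 -> (forall x, Z x -> weight Z y x0 <= weight Z y x) ->
  Z a -> Z b -> 0 < s -> s < 1 ->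
  weight Z y (s *: a + (1 - s) *: b) = weight Z y x0 -> weight Z y a = weight Z y x0.
Proof.
move=> Zx0 minx Za Zb s0 s1 wx.
set m := weight Z y x0.
have m0 : 0 < m := @w_pos _ Zx0.
apply/eqP; rewrite eq_le; apply/andP; split; last exact: minx.
rewrite leNgt; apply/negP => ma.
have ma' : 0 < weight Z y a - m by rewrite subr_gt0.
have [ta Tta tam] := sup_adherent ma' (Thas a).
have mta : m < ta by move: tam; rewrite -wE subKr.
have ta0 : 0 < ta by apply: lt_trans mta.
have ta1 : ta < 1 by case: Tta => /andP[].
set d := m^-1 - s / ta.
have d0 : 0 < d.
  rewrite /d subr_gt0; apply: (@lt_trans _ _ (ta^-1)).
    by rewrite ltr_pdivrMr // mulVf ?gt_eqF // ltr_pdivlMr // mul1r.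
  by rewrite ltf_pV2 // posrE.
have s1' : 0 < 1 - s by rewrite subr_gt0.
set c := (1 - s) / d.
have c0 : 0 < c by rewrite divr_gt0.
have md : m * d = 1 - s * (m / ta) by rewrite /d; field; rewrite !gt_eqF.
have cm : c < m.
  rewrite /c ltr_pdivrMr // md ltrD2l ltrN2 gtr_pMr //.
  by rewrite ltr_pdivrMr // mul1r.
have cb : c < weight Z y b by apply: lt_le_trans cm (minx _ Zb).
have cb' : 0 < weight Z y b - c by rewrite subr_gt0.
have [tb Ttb tbc] := sup_adherent cb' (Thas b).
have ctb : c < tb by move: tbc; rewrite -wE subKr.
have tb0 : 0 < tb by apply: lt_trans ctb.
have Tx := @combo _ _ _ _ _ Za Zb s0 s1 Tta Ttb ta0 tb0.
have := @Tw _ _ Tx; rewrite wx -/m.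
set u := s / ta + (1 - s) / tb.
have u0 : 0 < u by rewrite addr_gt0 // divr_gt0.
have ud : (1 - s) / tb < d.
  by rewrite ltr_pdivrMr // mulrC -ltr_pdivrMr.
have um : u < m^-1.
  by rewrite /u (_ : m^-1 = s / ta + d) ?ltrD2l // /d addrC subrK.
have : m < u^-1 by rewrite -[m]invrK ltf_pV2 // posrE ?invr_gt0.
by move=> /lt_le_trans H /H; rewrite ltxx.
Qed.

Definition q (x : 'rV[R]_n) := \sum_j x 0 j ^+ 2.

Lemma qcont : continuous q.
Proof.
apply: continuous_big; first exact: add_continuous.
move=> j _ x.
have h := @coord_continuous R 1 n 0 j x.
exact: (cvgM h h).
Qed.

Lemma qstrict a b x (t : R) : 0 < t -> t < 1 -> x = t *: a + (1 - t) *: b ->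
  q a <= q x -> q b <= q x -> a = b.
Proof.
move=> t0 t1 ex qa qb.
have E : t * q a + (1 - t) * q b - q x = t * (1 - t) * \sum_j (a 0 j - b 0 j) ^+ 2.
  rewrite /q !mulr_sumr -big_split /= -sumrB; apply: eq_bigr => j _.
  by rewrite ex !mxE; ring.
have t1' : 0 < 1 - t by rewrite subr_gt0.
have S0 : \sum_j (a 0 j - b 0 j) ^+ 2 = 0.
  apply/eqP; rewrite eq_le sumr_ge0 ?andbT; last by move=> j _; exact: sqr_ge0.
  have : t * (1 - t) * \sum_j (a 0 j - b 0 j) ^+ 2 <= 0.
    rewrite -E subr_le0.
    have -> : q x = t * q x + (1 - t) * q x by ring.
    by apply: lerD; apply: ler_wpM2l => //; exact: ltW.
  by rewrite pmulr_rle0 // mulr_gt0.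
apply/rowP => j; apply/eqP; rewrite -subr_eq0 -sqrf_eq0.
by rewrite (psumr_eq0P (fun j _ => sqr_ge0 (a 0 j - b 0 j)) S0).
Qed.

Hypothesis cpt : compact Z.

Lemma main_sec : exists x, extreme_point Z x /\ boundariness Z y = weight Z y x.
Proof.
have [r [r0 Hr]] := wlip.
have Z0 : Z !=set0 by exists y.
have [x0 Zx0 minx] := EVT_min_rV Z0 cpt wcont.
rewrite inE in Zx0.
have minx' : forall x, Z x -> weight Z y x0 <= weight Z y x.
  by move=> x Zx; apply: minx; rewrite inE.
set m := weight Z y x0.
set M := Z `&` [set x | weight Z y x = m].
have clZ : closed Z by apply: compact_closed => //; exact: norm_hausdorff.
have clM : closed M.
  move=> x clx.
  have Zx : Z x.
    by apply: clZ => B nB; have [z [[Zz _] Bz]] := clx B nB; exists z.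
  split => //; apply: contrapT => ne.
  have del0 : 0 < `|weight Z y x - m|.
    by rewrite normr_gt0 subr_eq0; apply/eqP.
  have e2 : 0 < `|weight Z y x - m| / 2 by rewrite divr_gt0.
  have [z [[Zz wz] Bz]] := clx _ (nbhsx_ballx x _ (mulr_gt0 r0 e2)).
  have h1 := Hr x z _ Zx Zz e2 (@ballE _ _ _ Bz).
  have h2 : weight Z y z <= weight Z y x + `|weight Z y x - m| / 2.
    by apply: Hr => // j; rewrite distrC; exact: (@ballE _ _ _ Bz).
  have := @aux_abs _ _ _ del0 h1 h2.
  by rewrite wz ltxx.
have cM : compact M by apply: (subclosed_compact clM cpt); exact: subIsetl.
have M0 : M !=set0 by exists x0.
have [x1 Mx1 maxq] := EVT_max_rV M0 cM (continuous_subspaceT qcont).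
rewrite inE in Mx1; case: Mx1 => Zx1 wx1.
exists x1; split.
  split => // a b t Za Zb /andP[t0 t1] ex.
  have wa : weight Z y a = m.
    by apply: (@face _ _ _ _ Zx0 minx' Za Zb t0 t1); rewrite -ex.
  have t1' : 0 < 1 - t by rewrite subr_gt0.
  have t1'' : 1 - t < 1 by rewrite ltrBlDr ltrDl.
  have wb : weight Z y b = m.
    apply: (@face _ _ _ _ Zx0 minx' Zb Za t1' t1'').
    have -> : (1 - t) *: b + (1 - (1 - t)) *: a = x1.
      by rewrite ex; apply/rowP => j; rewrite !mxE; ring.
    exact: wx1.
  have qa : q a <= q x1 by apply: maxq; rewrite inE.
  have qb : q b <= q x1 by apply: maxq; rewrite inE.
  have ab := @qstrict _ _ _ _ t0 t1 ex qa qb.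
  have xb : x1 = b by rewrite ex ab; apply/rowP => j; rewrite !mxE; ring.
  by split; rewrite xb.
rewrite /boundariness wx1.
apply/eqP; rewrite eq_le; apply/andP; split.
  apply: ge_inf; last by exists x1 => //; rewrite wx1.
  by exists 0 => _ [x _ <-]; exact: w_ge0.
apply: lb_le_inf; first by exists m, x0.
by move=> _ [x Zx <-]; exact: minx'.
Qed.
End Main.


Theorem proposition1 (R : realType) (n : nat) (Z : set 'rV[R]_n) :
  convex_set Z -> compact Z ->
  forall y : 'rV[R]_n, Z y -> ~ alg_boundary Z y ->
  exists x : 'rV[R]_n, extreme_point Z x /\ boundariness Z y = weight Z y x.
Proof.
move=> cvx cpt y Zy nb.
have cZ := @convZ _ _ _ cvx.
have yint : forall x, Z x -> exists e : R, 0 < e /\ Z (y - e *: (x - y)).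
  move=> x Zx.
  have : leC Z x y by apply: contrapT => nl; apply: nb; split => //; exists x.
  move=> [z [Zz [t [/andP[t0 t1] ey]]]].
  have [t1e|t1n] := eqVneq t 1.
    exists 1; split => //.
    have xy : x = y by rewrite ey t1e; apply/rowP => j; rewrite !mxE; ring.
    by rewrite xy subrr scaler0 subr0.
  have t1' : t < 1 by rewrite lt_neqAle t1n t1.
  have t1'' : 0 < 1 - t by rewrite subr_gt0.
  exists (t / (1 - t)); split; first by rewrite divr_gt0.
  have -> : y - (t / (1 - t)) *: (x - y) = z.
    by rewrite ey; apply/rowP => j; rewrite !mxE; field; rewrite gt_eqF.
  exact: Zz.
exact: (@main_sec R n Z cZ y Zy yint cpt).
Qed.
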